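(* Let $\Omega\subset\mathbb{C}^n$ be a bounded domain, let $\mathcal R$ and $\mathcal R'$ be quasi-free Hilbert modules of rank $m$ over $A(\Omega)$ with generating sets $\{f_i\}_{i=1}^m$ and $\{g_i\}_{i=1}^m$, and let $X:\mathcal R\to\mathcal R'$ be a module map with $Xf_i=\sum_{j=1}^m\psi_{ij}g_j$ for $1\le i\le m$, where $\Psi=(\psi_{ij})\in\mathrm{Hol}_m(\Omega)$. Then for every $z\in\Omega$ and $1\le i\le m$, \[(X\otimes_{A(\Omega)}1_{\mathbb C_z})(f_i\otimes_{A(\Omega)}1_z)=\sum_{j=1}^m\psi_{ij}(z)\,(g_j\otimes_{A(\Omega)}1_z).\]
   Context: $A(\Omega)$ is the closure, in the supremum norm on $\Omega$, of the set of functions holomorphic on some neighbourhood of $\overline\Omega$; $\ell^2_m$ is the $m$-dimensional Hilbert space ($m$ finite) and $\mathrm{Hol}_m(\Omega)$ is the space of holomorphic $\mathcal L(\ell^2_m)$-valued functions on $\Omega$. A quasi-free Hilbert module of rank $m$ over $A(\Omega)$ is a Hilbert space $\mathcal R$ obtained as the completion of $A(\Omega)\otimes\ell^2_m$ (regarded as $\ell^2_m$-valued holomorphic functions on $\Omega$) with respect to an inner product such that: (1) for each $z\in\Omega$ evaluation at $z$ is bounded, with norm locally uniformly bounded in $z$; (2) $\|\varphi F\|_{\mathcal R}\le\|\varphi\|_{A(\Omega)}\|F\|_{\mathcal R}$; (3) if $(F_i)$ is Cauchy in $\mathcal R$-norm, then $F_i(z)\to0$ for all $z$ iff $\|F_i\|_{\mathcal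 R}\to0$. $A(\Omega)$ acts by multiplication. For $z\in\Omega$, $\mathbb C_z$ is $\mathbb C$ with action $\varphi\cdot\lambda=\varphi(z)\lambda$; the localization $\mathcal R\otimes_{A(\Omega)}\mathbb C_z$ is identified with $\mathcal R/\mathcal R_z$, $\mathcal R_z$ the closure of $\{\varphi h:\varphi\in A(\Omega),\varphi(z)=0,h\in\mathcal R\}$; $h\otimes 1_z$ is the class of $h$, and $X\otimes1_{\mathbb C_z}$ is the induced map $h\otimes1_z\mapsto Xh\otimes1_z$. A generating set is $\{f_1,\dots,f_m\}\subset\mathcal R$ whose $A(\Omega)$-multiples span a dense subspace and with $\{f_i\otimes1_z\}$ a basis of $\mathcal R\otimes_{A(\Omega)}\mathbb C_z$ for each $z$. A module map is a bounded linear $X$ with $X(\varphi h)=\varphi X(h)$. *)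

(* Defs.v *)
From HB Require Import structures.
From mathcomp Require Import all_boot all_order all_algebra.
From mathcomp Require Import reals.
From mathcomp Require Import complex.
Set Implicit Arguments. Unset Strict Implicit. Unset Printing Implicit Defensive.
Import Order.TTheory GRing.Theory Num.Theory.
Local Open Scope ring_scope.
Local Open Scope complex_scope.

Definition cabs (R : realType) (z : R[i]) : R :=
  Num.sqrt (complex.Re z ^+ 2 + complex.Im z ^+ 2).

Definition vnorm (R : realType) (k : nat) (v : 'rV[R[i]]_k) : R :=
  Num.sqrt (\sum_(j < k) cabs (v 0 j) ^+ 2).

Definition cn_open (R : realType) (n : nat) (U : 'rV[R[i]]_n -> Prop) : Prop :=
  forall z, U z -> exists r : R, 0 < r /\ forall w, vnorm (w - z) < r -> U w.

Definition cn_closure (R : realType) (n : nat) (U : 'rV[R[i]]_n -> Prop)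
  (w : 'rV[R[i]]_n) : Prop :=
  forall r : R, 0 < r -> exists z, U z /\ vnorm (w - z) < r.

Definition cn_connected (R : realType) (n : nat) (U : 'rV[R[i]]_n -> Prop) : Prop :=
  forall A B : 'rV[R[i]]_n -> Prop, cn_open A -> cn_open B ->
    (forall z, U z -> A z \/ B z) ->
    (forall z, U z -> A z -> B z -> False) ->
    (forall z, U z -> ~ A z) \/ (forall z, U z -> ~ B z).

Definition bounded_domain (R : realType) (n : nat) (U : 'rV[R[i]]_n -> Prop) : Prop :=
  [/\ exists z, U z, cn_open U, cn_connected U
    & exists M : R, forall z, U z -> vnorm z <= M].

Definition holo_at (R : realType) (n : nat) (f : 'rV[R[i]]_n -> R[i])
  (z : 'rV[R[i]]_n) : Prop :=
  exists d : 'rV[R[i]]_n, forall e : R, 0 < e -> exists del : R, 0 < del /\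
    forall h : 'rV[R[i]]_n, vnorm h < del ->
      cabs (f (z + h) - f z - \sum_(k < n) d 0 k * h 0 k) <= e * vnorm h.

Definition holo_on (R : realType) (n : nat) (U : 'rV[R[i]]_n -> Prop)
  (f : 'rV[R[i]]_n -> R[i]) : Prop := forall z, U z -> holo_at f z.

(* Hol_m(Omega): L(l^2_m)-valued holomorphic functions = m x m matrices of
   holomorphic functions *)
Definition Hol_m (R : realType) (n m : nat) (Om : 'rV[R[i]]_n -> Prop)
  (Psi : 'I_m -> 'I_m -> 'rV[R[i]]_n -> R[i]) : Prop :=
  forall i j, holo_on Om (Psi i j).

Definition in_A (R : realType) (n : nat) (Om : 'rV[R[i]]_n -> Prop)
  (phi : 'rV[R[i]]_n -> R[i]) : Prop :=
  forall e : R, 0 < e -> exists (U : 'rV[R[i]]_n -> Prop) (g : 'rV[R[i]]_n -> R[i]),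
    [/\ cn_open U, (forall w, cn_closure Om w -> U w), holo_on U g
      & forall z, Om z -> cabs (phi z - g z) <= e].

(* M bounds the supremum norm of phi on Omega: ||phi||_{A(Omega)} <= M *)
Definition supbound (R : realType) (n : nat) (Om : 'rV[R[i]]_n -> Prop)
  (phi : 'rV[R[i]]_n -> R[i]) (M : R) : Prop :=
  forall z, Om z -> cabs (phi z) <= M.

Definition hnorm (R : realType) (H : lmodType R[i]) (ip : H -> H -> R[i]) (x : H) : R :=
  Num.sqrt (complex.Re (ip x x)).

Definition is_hilbert (R : realType) (H : lmodType R[i]) (ip : H -> H -> R[i]) : Prop :=
  [/\ (forall (a : R[i]) (x y w : H), ip (a *: x + y) w = a * ip x w + ip y w),
      (forall x y : H, ip x y = (ip y x)^*),
      (forall x : H, 0 <= ip x x),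
      (forall x : H, ip x x = 0 -> x = 0)
    &
      forall u : nat -> H,
        (forall e : R, 0 < e -> exists N, forall p q, (N <= p)%N -> (N <= q)%N ->
           hnorm ip (u p - u q) < e) ->
        exists x : H, forall e : R, 0 < e -> exists N, forall p, (N <= p)%N ->
           hnorm ip (u p - x) < e].

(* The Hilbert space H is the completion; ev h is the l^2_m-valued function on
   Omega representing h (ev is defined on all of H, i.e. evaluation extended
   to the completion). *)

(* h' = phi . h  (module action, as functions on Omega) *)
Definition act (R : realType) (n m : nat) (Om : 'rV[R[i]]_n -> Prop)
  (H : lmodType R[i]) (ev : H -> 'rV[R[i]]_n -> 'rV[R[i]]_m)
  (phi : 'rV[R[i]]_n -> R[i]) (h h' : H) : Prop :=
  forall z, Om z -> ev h' z = phi z *: ev h z.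

(* h belongs to the pre-space A(Omega) (x) l^2_m *)
Definition in_pre (R : realType) (n m : nat) (Om : 'rV[R[i]]_n -> Prop)
  (H : lmodType R[i]) (ev : H -> 'rV[R[i]]_n -> 'rV[R[i]]_m) (h : H) : Prop :=
  forall j : 'I_m, in_A Om (fun z => ev h z 0 j).

Definition is_qfhm (R : realType) (n m : nat) (Om : 'rV[R[i]]_n -> Prop)
  (H : lmodType R[i]) (ip : H -> H -> R[i])
  (ev : H -> 'rV[R[i]]_n -> 'rV[R[i]]_m) : Prop :=
  is_hilbert ip /\
      (forall (a : R[i]) (x y : H) z, ev (a *: x + y) z = a *: ev x z + ev y z) /\
      (* every element of A(Omega) (x) l^2_m is an element of H ... *)
      (forall F : 'rV[R[i]]_n -> 'rV[R[i]]_m,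
         (forall j : 'I_m, in_A Om (fun z => F z 0 j)) ->
         exists h : H, forall z, Om z -> ev h z = F z) /\
      (* ... and these are dense (H is the completion) *)
      (forall (h : H) (e : R), 0 < e -> exists h' : H, in_pre Om ev h' /\ hnorm ip (h - h') < e) /\
      (forall z, Om z -> exists (r c : R), 0 < r /\ forall w, Om w -> vnorm (w - z) < r ->
          forall h : H, vnorm (ev h w) <= c * hnorm ip h) /\
      (forall phi (h : H), in_A Om phi -> exists h' : H, act Om ev phi h h' /\
          forall M : R, supbound Om phi M -> hnorm ip h' <= M * hnorm ip h) /\
      (forall u : nat -> H, (forall k, in_pre Om ev (u k)) ->
        (forall e : R, 0 < e -> exists N, forall p q, (N <= p)%N -> (N <= q)%N ->
           hnorm ip (u p - u q) < e) ->
        ((forall z, Om z -> forall e : R, 0 < e -> exists N, forall p, (N <= p)%N ->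
            vnorm (ev (u p) z) < e) <->
         (forall e : R, 0 < e -> exists N, forall p, (N <= p)%N -> hnorm ip (u p) < e))).

(* R_z: the closure of the linear span of {phi h : phi in A(Omega), phi(z)=0, h in H} *)
Definition in_Rz (R : realType) (n m : nat) (Om : 'rV[R[i]]_n -> Prop)
  (H : lmodType R[i]) (ip : H -> H -> R[i]) (ev : H -> 'rV[R[i]]_n -> 'rV[R[i]]_m)
  (z : 'rV[R[i]]_n) (h : H) : Prop :=
  forall e : R, 0 < e -> exists (k : nat) (phi : 'I_k -> 'rV[R[i]]_n -> R[i])
      (c : 'I_k -> R[i]) (g g' : 'I_k -> H),
    (forall l, [/\ in_A Om (phi l), phi l z = 0 & act Om ev (phi l) (g l) (g' l)]) /\
    hnorm ip (h - \sum_(l < k) c l *: g' l) < e.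

(* generating set {f_i}: A(Omega)-multiples span a dense subspace, and the
   classes f_i (x) 1_z form a basis of R (x)_{A(Omega)} C_z = R / R_z *)
Definition is_generating (R : realType) (n m : nat) (Om : 'rV[R[i]]_n -> Prop)
  (H : lmodType R[i]) (ip : H -> H -> R[i]) (ev : H -> 'rV[R[i]]_n -> 'rV[R[i]]_m)
  (f : 'I_m -> H) : Prop :=
  [/\ (forall (h : H) (e : R), 0 < e -> exists (k : nat)
          (phi : 'I_k -> 'rV[R[i]]_n -> R[i]) (c : 'I_k -> R[i])
          (idx : 'I_k -> 'I_m) (g' : 'I_k -> H),
        (forall l, in_A Om (phi l) /\ act Om ev (phi l) (f (idx l)) (g' l)) /\
        hnorm ip (h - \sum_(l < k) c l *: g' l) < e),
      (forall z, Om z -> forall c : 'I_m -> R[i],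
          in_Rz Om ip ev z (\sum_(i < m) c i *: f i) -> forall i, c i = 0)
    & (forall z, Om z -> forall h : H, exists c : 'I_m -> R[i],
          in_Rz Om ip ev z (h - \sum_(i < m) c i *: f i))].

Definition is_module_map (R : realType) (n m : nat) (Om : 'rV[R[i]]_n -> Prop)
  (H : lmodType R[i]) (ip : H -> H -> R[i]) (ev : H -> 'rV[R[i]]_n -> 'rV[R[i]]_m)
  (H' : lmodType R[i]) (ip' : H' -> H' -> R[i]) (ev' : H' -> 'rV[R[i]]_n -> 'rV[R[i]]_m)
  (X : H -> H') : Prop :=
  [/\ (forall (a : R[i]) (x y : H), X (a *: x + y) = a *: X x + X y),
      (exists c : R, forall h : H, hnorm ip' (X h) <= c * hnorm ip h)
    & (forall phi (h h1 : H), in_A Om phi -> act Om ev phi h h1 ->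
          act Om ev' phi (X h) (X h1))].

(* Main.v *)
Require Import Defs.
From HB Require Import structures.
From mathcomp Require Import all_boot all_order all_algebra.
From mathcomp Require Import reals.
From mathcomp Require Import complex.
From mathcomp Require Import lra.
Import Order.TTheory GRing.Theory Num.Theory.
Local Open Scope ring_scope.

Lemma cabs0 (R : realType) : cabs (0 : R[i]) = 0.
Proof. by rewrite /cabs /= expr0n /= addr0 sqrtr0. Qed.

Lemma vnorm_ge0 (R : realType) k (v : 'rV[R[i]]_k) : 0 <= vnorm v.
Proof. exact: sqrtr_ge0. Qed.

Lemma vnorm0 (R : realType) k : vnorm (0 : 'rV[R[i]]_k) = 0.
Proof.
rewrite /vnorm big1 ?sqrtr0 // => j _; by rewrite mxE cabs0 expr0n.
Qed.

Lemma vnorm_eq0 (R : realType) k (v : 'rV[R[i]]_k) : vnorm v = 0 -> v = 0.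
Proof.
move=> /eqP; rewrite sqrtr_eq0 => Hle.
have Hs : \sum_(j < k) cabs (v 0 j) ^+ 2 = 0.
  by apply/eqP; rewrite eq_le Hle sumr_ge0 // => j _; rewrite sqr_ge0.
apply/matrixP => a j; rewrite (ord1 a) mxE.
have := psumr_eq0P (fun j _ => sqr_ge0 (cabs (v 0 j))) Hs (i:=j) isT.
move/eqP; rewrite sqrf_eq0 /cabs sqrtr_eq0 => H.
case: (v 0 j) H => a1 b1 /= H.
have ha : a1 ^+ 2 = 0.
  apply/eqP; rewrite eq_le sqr_ge0 andbT.
  by apply: le_trans H; rewrite lerDl sqr_ge0.
have hb : b1 ^+ 2 = 0.
  apply/eqP; rewrite eq_le sqr_ge0 andbT.
  by apply: le_trans H; rewrite lerDr sqr_ge0.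
move/eqP: ha; rewrite sqrf_eq0 => /eqP ->.
by move/eqP: hb; rewrite sqrf_eq0 => /eqP ->.
Qed.

Lemma in_A_const (R : realType) n (Om : 'rV[R[i]]_n -> Prop) (a : R[i]) :
  in_A Om (fun _ => a).
Proof.
move=> e he; exists (fun _ => True), (fun _ => a); split.
- by move=> z _; exists 1; split.
- by [].
- move=> z _; exists 0 => e' he'; exists 1; split => // h _.
  rewrite subrr big1 ?subr0 ?cabs0; last by move=> k _; rewrite mxE mul0r.
  by rewrite ?subr0 ?cabs0 mulr_ge0 ?vnorm_ge0 // ltW.
- by move=> z _; rewrite subrr cabs0 ltW.
Qed.


Lemma ev0 {R : realType} {n m} {H : lmodType R[i]} {ev : H -> 'rV[R[i]]_n -> 'rV[R[i]]_m}
  (Hl : forall (a : R[i]) (x y : H) z, ev (a *: x + y) z = a *: ev x z + ev y z) z :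
  ev 0 z = 0.
Proof.
have := Hl 1 0 0 z; rewrite scaler0 addr0 scale1r => E.
by apply: (addrI (ev 0 z)); rewrite addr0 -E.
Qed.

Lemma evD {R : realType} {n m} {H : lmodType R[i]} {ev : H -> 'rV[R[i]]_n -> 'rV[R[i]]_m}
  (Hl : forall (a : R[i]) (x y : H) z, ev (a *: x + y) z = a *: ev x z + ev y z) x y z :
  ev (x + y) z = ev x z + ev y z.
Proof. by have := Hl 1 x y z; rewrite !scale1r. Qed.

Lemma evZ {R : realType} {n m} {H : lmodType R[i]} {ev : H -> 'rV[R[i]]_n -> 'rV[R[i]]_m}
  (Hl : forall (a : R[i]) (x y : H) z, ev (a *: x + y) z = a *: ev x z + ev y z) a x z :
  ev (a *: x) z = a *: ev x z.
Proof. by have := Hl a x 0 z; rewrite !addr0 (ev0 Hl) addr0. Qed.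

Lemma evB {R : realType} {n m} {H : lmodType R[i]} {ev : H -> 'rV[R[i]]_n -> 'rV[R[i]]_m}
  (Hl : forall (a : R[i]) (x y : H) z, ev (a *: x + y) z = a *: ev x z + ev y z) x y z :
  ev (x - y) z = ev x z - ev y z.
Proof.
rewrite (evD Hl) -scaleN1r (evZ Hl) scaleN1r //.
Qed.

Lemma ev_sum {R : realType} {n m} {H : lmodType R[i]} {ev : H -> 'rV[R[i]]_n -> 'rV[R[i]]_m}
  (Hl : forall (a : R[i]) (x y : H) z, ev (a *: x + y) z = a *: ev x z + ev y z) k
  (F : 'I_k -> H) z :
  ev (\sum_(l < k) F l) z = \sum_(l < k) ev (F l) z.
Proof.
apply: (big_morph (fun x => ev x z)) => [x y|]; [exact: (evD Hl x y z) | exact: (ev0 Hl z)].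
Qed.

Lemma hnorm_ge0 (R : realType) (H : lmodType R[i]) (ip : H -> H -> R[i]) x :
  0 <= hnorm ip x.
Proof. exact: sqrtr_ge0. Qed.

Lemma Rz_ker {R : realType} {n m} {Om : 'rV[R[i]]_n -> Prop}
  {H : lmodType R[i]} {ip : H -> H -> R[i]} {ev : H -> 'rV[R[i]]_n -> 'rV[R[i]]_m}
  (Hl : forall (a : R[i]) (x y : H) z, ev (a *: x + y) z = a *: ev x z + ev y z) z r :
  (exists (r0 c : R), 0 < r0 /\ forall w, Om w -> vnorm (w - z) < r0 ->
          forall h : H, vnorm (ev h w) <= c * hnorm ip h) ->
  Om z -> in_Rz Om ip ev z r -> ev r z = 0.
Proof.
move=> [r0 [c0 [hr0 Hb]]] Oz HR.
have Hb' : forall h, vnorm (ev h z) <= c0 * hnorm ip h.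
  by apply: Hb => //; rewrite subrr vnorm0.
set K := `|c0| + 1.
have K0 : 0 < K by rewrite /K ltr_pwDr // normr_ge0.
have Hall : forall e : R, 0 < e -> vnorm (ev r z) <= e.
  move=> e he.
  have [k [phi [c [g [g' [Hg Hn]]]]]] := HR (e / K) (divr_gt0 he K0).
  have Es : ev (\sum_(l < k) c l *: g' l) z = 0.
    rewrite (ev_sum Hl) big1 // => l _.
    have [_ P0 Ha] := Hg l.
    by rewrite (evZ Hl) Ha // P0 scale0r scaler0.
  have := Hb' (r - \sum_(l < k) c l *: g' l).
  rewrite (evB Hl) Es subr0 => Hle; apply: (le_trans Hle).
  apply: (le_trans (y := K * hnorm ip (r - \sum_(l < k) c l *: g' l))).
    apply: ler_wpM2r; first exact: hnorm_ge0.
    by rewrite /K (le_trans (ler_norm c0)) // lerDl.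
  rewrite -(divfK (lt0r_neq0 K0) e) mulrC ler_wpM2r ?ltW //.
apply: vnorm_eq0; apply/eqP; rewrite eq_le vnorm_ge0 andbT.
case: (leP (vnorm (ev r z)) 0) => // hp.
have := Hall _ (divr_gt0 hp (ltr0Sn _ 1)).
by rewrite ler_pdivlMr // mulr_natr mulr2n gerDl leNgt hp.
Qed.

Theorem lemma6 (R : realType) (n m : nat) (Om : 'rV[R[i]]_n -> Prop)
  (H : lmodType R[i]) (ip : H -> H -> R[i]) (ev : H -> 'rV[R[i]]_n -> 'rV[R[i]]_m)
  (H' : lmodType R[i]) (ip' : H' -> H' -> R[i]) (ev' : H' -> 'rV[R[i]]_n -> 'rV[R[i]]_m)
  (f : 'I_m -> H) (g : 'I_m -> H') (X : H -> H')
  (Psi : 'I_m -> 'I_m -> 'rV[R[i]]_n -> R[i]) :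
  bounded_domain Om ->
  is_qfhm Om ip ev -> is_qfhm Om ip' ev' ->
  is_generating Om ip ev f -> is_generating Om ip' ev' g ->
  is_module_map Om ip ev ip' ev' X ->
  Hol_m Om Psi ->
  (forall i z, Om z -> ev' (X (f i)) z = \sum_(j < m) Psi i j z *: ev' (g j) z) ->
  forall z, Om z -> forall i : 'I_m,
    in_Rz Om ip' ev' z (X (f i) - \sum_(j < m) Psi i j z *: g j).
Proof.
move=> _ _ [_ [Hl' [Hemb' [_ [Hbd' _]]]]] _ [_ _ Hgen3'] _ _ HX z Oz i.
have Hind : forall c : 'I_m -> R[i], \sum_(j < m) c j *: ev' (g j) z = 0 ->
    forall j, c j = 0.
  move=> c Hc.
  have HD : forall k : 'I_m, exists d : 'I_m -> R[i],
      \sum_(j < m) d j *: ev' (g j) z = delta_mx 0 k.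
    move=> k.
    have [|u Hu] := Hemb' (fun _ => delta_mx 0 k).
      by move=> j; apply: in_A_const.
    have [d Hd] := Hgen3' z Oz u.
    exists d; have := Rz_ker Hl' z _ (Hbd' z Oz) Oz Hd.
    rewrite (evB Hl') (ev_sum Hl') Hu //; move/eqP; rewrite subr_eq0 => /eqP ->.
    by apply: eq_bigr => j _; rewrite (evZ Hl').
  have [D HDk] := fin_all_exists HD.
  pose Gm : 'M[R[i]]_m := \matrix_(j, k) ev' (g j) z 0 k.
  pose Dm : 'M[R[i]]_m := \matrix_(k, j) D k j.
  have DG : Dm *m Gm = 1%:M.
    apply/matrixP => k l; rewrite !mxE.
    have := congr1 (fun M : 'rV_m => M 0 l) (HDk k); rewrite /= !mxE summxE eqxx /= [l == k]eq_sym => <-.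
    rewrite /Dm /Gm (eq_bigr (fun j => D k j * ev' (g j) z 0 l)); last by move=> j _; rewrite !mxE.
    by rewrite [RHS](eq_bigr (fun j => D k j * ev' (g j) z 0 l)) // => j _; rewrite !mxE.
  have GD := mulmx1C DG.
  pose cr : 'rV[R[i]]_m := \row_j c j.
  have cG : cr *m Gm = 0.
    apply/matrixP => a l; rewrite !mxE.
    have := congr1 (fun M : 'rV_m => M 0 l) Hc; rewrite /= [RHS]mxE summxE => H0.
    rewrite -[RHS]H0.
    rewrite /cr /Gm (eq_bigr (fun j => c j * ev' (g j) z 0 l)); last by move=> j _; rewrite !mxE.
    by rewrite [RHS](eq_bigr (fun j => c j * ev' (g j) z 0 l)) // => j _; rewrite !mxE.
  have cr0 : cr = 0 by rewrite -(mulmx1 cr) -GD mulmxA cG mul0mx.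
  by move=> j; have := congr1 (fun M : 'rV_m => M 0 j) cr0; rewrite /= !mxE.
set h := X (f i) - _.
have [c Hc] := Hgen3' z Oz h.
have E := Rz_ker Hl' z _ (Hbd' z Oz) Oz Hc.
have Eh : ev' h z = 0.
  rewrite /h (evB Hl') (ev_sum Hl') HX //; apply/eqP; rewrite subr_eq0; apply/eqP.
  by apply: eq_bigr => j _; rewrite (evZ Hl').
move: E; rewrite (evB Hl') Eh sub0r (ev_sum Hl') => /eqP; rewrite oppr_eq0 => /eqP E.
have c0 : forall j, c j = 0.
  apply: Hind; rewrite -[RHS]E.
  by rewrite [RHS](eq_bigr (fun j => c j *: ev' (g j) z)) // => j _; rewrite (evZ Hl').
have Z : \sum_(j < m) c j *: g j = 0 by apply: big1 => j _; rewrite c0 scale0r.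
by move: Hc; rewrite Z subr0.
Qed.
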